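(* For every $n\ge 0$, the coefficient $\ell_{n,1}$ equals the number of intervals of the Tamari lattice $\mathrm{Tam}_n$, i.e. the number of pairs $(A,B)$ of formulas of size $n$ with frontier $p_0,\dots,p_n$ such that $A\le B$ in the Tamari order. Equivalently, $L_1(z)=\sum_n\ell_{n,1}z^n$ is the ordinary generating function of the number of intervals of $\mathrm{Tam}_n$.
   Context: Formulas are built from atoms by a binary product: every formula is an atom or $A\bullet B$. A context is a finite (possibly empty) list of formulas; commas denote concatenation. Size: $|p|=0$ for atoms, $|A\bullet B|=1+|A|+|B|$. Frontier: $\mathrm{fr}(p)=p$, $\mathrm{fr}(A\bullet B)=\mathrm{fr}(A),\mathrm{fr}(B)$. The Tamari order $\le$ on formulas is the least preorder with $(A\bullet B)\bullet C\le A\bullet(B\bullet C)$ and $A_1\le A_2$, $B_1\le B_2$ implying $A_1\bullet B_1\le A_2\bullet B_2$; $\mathrm{Tam}_n$ is the poset of formulas of size $n$ over a fixed frontier $p_0,\dots,p_n$ of distinct atoms (equivalently, binary trees with $n$ internal nodes under right rotation). A context is irreducible if its leftmost formula is not a product. A focused derivation is a finite derivation tree with no undischarged premises using only: ($\bullet L$) from $A,B,\Delta\vdash C$ infer $A\bullet B,\Delta\vdash C$; ($\bullet R^{foc}$) from $\Gamma\vdash A$ and $\Delta\vdash B$ infer $\Gamma,\Delta\vdash A\bullet B$ with $\Gamma$ irreducible; ($id^{atm}$) $p\vdash p$ for atoms $p$. Let $\ell_{n,k}$ be the number of focused derivations of sequents $\Gamma\vdash B$ with $|B|=n$, $\mathrm{fr}(B)=p_0,\dots,p_n$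 and $\Gamma$ a context of length $k$; $L(z,x)=\sum_{n,k}\ell_{n,k}z^nx^k$ and $L_1(z)$ is the coefficient of $x^1$ in $L$. *)

(* Defs.v *)
From Stdlib Require Import List Arith.
Import ListNotations.

Inductive formula : Type :=
| Atom : nat -> formula
| Prod : formula -> formula -> formula.

(* Contexts: finite lists of formulas; comma = list concatenation. *)
Definition context := list formula.

Fixpoint fsize (A : formula) : nat :=
  match A with
  | Atom _ => 0
  | Prod A B => S (fsize A + fsize B)
  end.

Fixpoint frontier (A : formula) : list nat :=
  match A with
  | Atom p => [p]
  | Prod A B => frontier A ++ frontier B
  end.

Inductive tam_le : formula -> formula -> Prop :=
| tam_refl A : tam_le A A
| tam_trans A B C : tam_le A B -> tam_le B C -> tam_le A C
| tam_assoc A B C : tam_le (Prod (Prod A B) C) (Prod A (Prod B C))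
| tam_prod A1 A2 B1 B2 :
    tam_le A1 A2 -> tam_le B1 B2 -> tam_le (Prod A1 B1) (Prod A2 B2).

Definition irreducible (G : context) : Prop :=
  match G with
  | Prod _ _ :: _ => False
  | _ => True
  end.

(* A valid tree is exactly a focused
   derivation (a tree of rule instances); the rule instance at each node is
   determined by its conclusion and premises. *)
Inductive dtree : Type :=
| Did : nat -> dtree
| DprodL : context -> formula -> dtree -> dtree
| DprodR : context -> formula -> dtree -> dtree -> dtree.

Definition concl (d : dtree) : context * formula :=
  match d with
  | Did p => ([Atom p], Atom p)
  | DprodL G C _ => (G, C)
  | DprodR G C _ _ => (G, C)
  end.

Fixpoint focused (d : dtree) : Prop :=
  match d with
  | Did _ => True
  | DprodL G C d1 =>
      (exists A B D, G = Prod A B :: D /\ concl d1 = (A :: B :: D, C))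
      /\ focused d1
  | DprodR G C d1 d2 =>
      (exists G1 G2 A B, G = G1 ++ G2 /\ C = Prod A B /\
         concl d1 = (G1, A) /\ concl d2 = (G2, B) /\ irreducible G1)
      /\ focused d1 /\ focused d2
  end.

Definition card_is {T : Type} (P : T -> Prop) (N : nat) : Prop :=
  exists l : list T, NoDup l /\ (forall x, P x <-> In x l) /\ length l = N.

Definition counted_deriv (n k : nat) (d : dtree) : Prop :=
  focused d /\ fsize (snd (concl d)) = n /\
  frontier (snd (concl d)) = seq 0 (S n) /\ length (fst (concl d)) = k.

Definition tamari_interval (n : nat) (AB : formula * formula) : Prop :=
  fsize (fst AB) = n /\ frontier (fst AB) = seq 0 (S n) /\
  fsize (snd AB) = n /\ frontier (snd AB) = seq 0 (S n) /\
  tam_le (fst AB) (snd AB).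

(* Main.v *)
Require Import Defs.
From Stdlib Require Import List Arith Lia Classical.
Import ListNotations.

Inductive foc : context -> formula -> Prop :=
| f_id p : foc [Atom p] (Atom p)
| f_L A B D C : foc (A::B::D) C -> foc (Prod A B :: D) C
| f_R G1 G2 A B : irreducible G1 -> foc G1 A -> foc G2 B -> foc (G1 ++ G2) (Prod A B).

Lemma foc_nonempty G C : foc G C -> G <> [].
Proof.
  induction 1; try discriminate.
  destruct G1; [contradiction|discriminate].
Qed.

Lemma adm_R : forall G A, foc G A -> forall D B, foc D B -> foc (G++D) (Prod A B).
Proof.
  induction 1 as [p|A B D C H IH|G1 G2 A B Hi H1 IH1 H2 IH2]; intros D0 B0 HD.
  - apply (f_R [Atom p] D0 (Atom p) B0); [exact I | constructor | assumption].
  - simpl. apply f_L. exact (IH _ _ HD).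
  - apply f_R; [|apply f_R; assumption|assumption].
    destruct G1 as [|x G1']; [exfalso; apply (foc_nonempty _ _ H1); reflexivity|].
    simpl in *. exact Hi.
Qed.

Lemma foc_id A : foc [A] A.
Proof.
  induction A. constructor. apply f_L. exact (adm_R [A1] A1 IHA1 [A2] A2 IHA2).
Qed.

Lemma cut_gen B Γ (HΓ : foc Γ B)
  (Hhead : forall X Y Δ2 C, B = Prod X Y -> foc (X::Y::Δ2) C -> foc (Γ++Δ2) C) :
  forall Δ C, foc Δ C -> forall Δ1 Δ2, Δ = Δ1 ++ B :: Δ2 -> foc (Δ1 ++ Γ ++ Δ2) C.
Proof.
  induction 1 as [p|A B0 D C H IH|G1 G2 A B0 Hi H1 IH1 H2 IH2]; intros Δ1 Δ2 E.
  - destruct Δ1 as [|x Δ1].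
    + simpl in E. injection E as <- <-. rewrite app_nil_r. exact HΓ.
    + destruct Δ1; discriminate.
  - destruct Δ1 as [|x Δ1'].
    + simpl in E. injection E as E1 E2. subst. simpl. eapply Hhead; eauto.
    + simpl in E. injection E as E1 E2. subst. simpl. apply f_L.
      exact (IH (A::B0::Δ1') Δ2 eq_refl).
  - apply app_eq_app in E. destruct E as [l [[E1 E2]|[E1 E2]]].
    + destruct l as [|x l].
      * simpl in E2. subst. rewrite app_nil_r in *.
        apply f_R; auto. exact (IH2 [] Δ2 eq_refl).
      * simpl in E2. injection E2 as <- E3. subst.
        rewrite (app_assoc Γ), (app_assoc Δ1). apply adm_R; auto.
    + subst. rewrite <- app_assoc. apply f_R; auto.
Qed.

Lemma head_case X Y
  (IHX : forall Γ, foc Γ X -> forall Δ1 Δ2 C, foc (Δ1++X::Δ2) C -> foc (Δ1++Γ++Δ2) C)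
  (IHY : forall Γ, foc Γ Y -> forall Δ1 Δ2 C, foc (Δ1++Y::Δ2) C -> foc (Δ1++Γ++Δ2) C) :
  forall Γ Z, foc Γ Z -> Z = Prod X Y -> forall Δ2 C, foc (X::Y::Δ2) C -> foc (Γ++Δ2) C.
Proof.
  induction 1 as [p|A B D C H IH|G1 G2 A B Hi H1 IH1 H2 IH2]; intros E Δ2 C0 HH.
  - discriminate.
  - simpl. apply f_L. exact (IH E _ _ HH).
  - injection E as -> ->.
    pose proof (IHX G1 H1 [] (Y::Δ2) C0 HH) as K. simpl in K.
    pose proof (IHY G2 H2 G1 Δ2 C0 K) as K2. rewrite <- app_assoc. exact K2.
Qed.

Lemma cut : forall B Γ, foc Γ B -> forall Δ1 Δ2 C, foc (Δ1 ++ B :: Δ2) C -> foc (Δ1 ++ Γ ++ Δ2) C.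
Proof.
  induction B as [p|X IHX Y IHY]; intros Γ HΓ Δ1 Δ2 C H.
  - refine (cut_gen _ Γ HΓ _ _ _ H Δ1 Δ2 eq_refl). intros; discriminate.
  - refine (cut_gen _ Γ HΓ _ _ _ H Δ1 Δ2 eq_refl).
    intros X' Y' Δ2' C' E H'. injection E as <- <-.
    exact (head_case X Y IHX IHY Γ _ HΓ eq_refl Δ2' C' H').
Qed.

Lemma complete A B : tam_le A B -> foc [A] B.
Proof.
  induction 1.
  - apply foc_id.
  - exact (cut B [A] IHtam_le1 [] [] C IHtam_le2).
  - apply f_L. apply f_L.
    exact (adm_R [A] A (foc_id A) [B;C] _ (adm_R [B] B (foc_id B) [C] C (foc_id C))).
  - apply f_L. exact (adm_R [A1] A2 IHtam_le1 [B1] B2 IHtam_le2).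
Qed.

Definition ctxf (G: context) : formula :=
  match G with [] => Atom 0 | X::r => fold_left Prod r X end.

Lemma fold_mono : forall G a b, tam_le a b -> tam_le (fold_left Prod G a) (fold_left Prod G b).
Proof. induction G; simpl; auto. intros; apply IHG; apply tam_prod; auto; apply tam_refl. Qed.

Lemma fold_assoc : forall G X Y, tam_le (fold_left Prod G (Prod X Y)) (Prod X (fold_left Prod G Y)).
Proof.
  induction G as [|Z G IH]; simpl; intros. apply tam_refl.
  eapply tam_trans. apply fold_mono. apply tam_assoc. apply IH.
Qed.

Lemma sound G C : foc G C -> tam_le (ctxf G) C.
Proof.
  induction 1 as [p|A B D C H IH|G1 G2 A B Hi H1 IH1 H2 IH2].
  - apply tam_refl.
  - exact IH.
  - destruct G1 as [|X r1]; [exfalso; apply (foc_nonempty _ _ H1); reflexivity|].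
    destruct G2 as [|Y r2]; [exfalso; apply (foc_nonempty _ _ H2); reflexivity|].
    simpl in *. rewrite fold_left_app. simpl.
    eapply tam_trans. apply fold_assoc. apply tam_prod; assumption.
Qed.

Definition flat (G : context) := flat_map frontier G.

Lemma foc_front G C : foc G C -> flat G = frontier C.
Proof.
  unfold flat; induction 1; simpl in *; auto.
  - rewrite <- app_assoc; auto.
  - rewrite flat_map_app; congruence.
Qed.

Lemma front_len A : length (frontier A) = S (fsize A).
Proof. induction A; simpl; auto. rewrite length_app; lia. Qed.

Lemma focused_foc d : focused d -> foc (fst (concl d)) (snd (concl d)).
Proof.
  induction d; simpl; intros H.
  - constructor.
  - destruct H as [[A [B [D [E1 E2]]]] Hf]. subst. specialize (IHd Hf).
    rewrite E2 in IHd. simpl in IHd. apply f_L; auto.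
  - destruct H as [[G1 [G2 [A [B [E1 [E2 [E3 [E4 Hi]]]]]]]] [Hf1 Hf2]]. subst.
    specialize (IHd1 Hf1); specialize (IHd2 Hf2).
    rewrite E3 in IHd1; rewrite E4 in IHd2; simpl in *; apply f_R; auto.
Qed.

Lemma foc_focused G C : foc G C -> exists d, focused d /\ concl d = (G, C).
Proof.
  induction 1 as [p|A B D C H IH|G1 G2 A B Hi H1 IH1 H2 IH2].
  - exists (Did p). simpl; auto.
  - destruct IH as [d [Hd Ec]]. exists (DprodL (Prod A B :: D) C d). simpl.
    split; auto. split; auto. exists A, B, D. auto.
  - destruct IH1 as [d1 [Hd1 Ec1]]. destruct IH2 as [d2 [Hd2 Ec2]].
    exists (DprodR (G1++G2) (Prod A B) d1 d2). simpl.
    split; [|reflexivity]. split; [|auto].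
    exists G1, G2, A, B. auto.
Qed.

Lemma flat_nil l : flat l = [] -> l = [].
Proof.
  destruct l as [|f l]; auto. unfold flat; simpl. intros H.
  assert (K := front_len f). destruct (frontier f); simpl in *; [lia|discriminate].
Qed.

Lemma split_unique (G1 G2 H1 H2 : context) :
  G1 ++ G2 = H1 ++ H2 -> flat G1 = flat H1 -> G1 = H1 /\ G2 = H2.
Proof.
  intros E F. apply app_eq_app in E. destruct E as [l [[E1 E2]|[E1 E2]]]; subst.
  - unfold flat in F. rewrite flat_map_app in F.
    assert (flat l = []) as Hl.
    { apply (f_equal (@length nat)) in F. rewrite length_app in F.
      assert (length (flat l) = 0) as L0 by (unfold flat; lia).
      destruct (flat l); [auto|simpl in L0; lia]. }
    apply flat_nil in Hl. subst. rewrite app_nil_r. auto.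
  - unfold flat in F. rewrite flat_map_app in F.
    assert (flat l = []) as Hl.
    { apply (f_equal (@length nat)) in F. rewrite length_app in F.
      assert (length (flat l) = 0) as L0 by (unfold flat; lia).
      destruct (flat l); [auto|simpl in L0; lia]. }
    apply flat_nil in Hl. subst. rewrite app_nil_r. auto.
Qed.

Lemma head_prod_irred G1 G2 A B D Ae :
  foc G1 Ae -> irreducible G1 -> G1 ++ G2 = Prod A B :: D -> False.
Proof.
  intros K Hi E.
  destruct G1 as [|x G1]; [apply (foc_nonempty _ _ K); reflexivity|].
  simpl in E. injection E as Ex _. subst. simpl in Hi. destruct Hi.
Qed.

Lemma focused_unique : forall d1 d2, focused d1 -> focused d2 -> concl d1 = concl d2 -> d1 = d2.
Proof.
  induction d1 as [n|c f d1 IH|c f d1 IH1 d1' IH2];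
    destruct d2 as [m|c0 f0 d2|c0 f0 d2 d2']; simpl; intros H1 H2 E.
  - congruence.
  - destruct H2 as [[A [B [D [E' _]]]] _]. congruence.
  - destruct H2 as [[G1 [G2 [A [B [_ [E' _]]]]]] _]. congruence.
  - destruct H1 as [[A [B [D [E' _]]]] _]. congruence.
  - destruct H1 as [[A [B [D [E1 E2]]]] Hf1].
    destruct H2 as [[A' [B' [D' [E1' E2']]]] Hf2].
    injection E as <- <-. subst. injection E1' as <- <- <-.
    f_equal. apply IH; auto. congruence.
  - destruct H1 as [[A [B [D [E1 E2]]]] Hf1].
    destruct H2 as [[G1 [G2 [A' [B' [E3 [_ [E4 [_ Hi]]]]]]]] [Hf2 _]].
    pose proof (focused_foc _ Hf2) as K. rewrite E4 in K. simpl in K.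
    exfalso. apply (head_prod_irred G1 G2 A B D A' K Hi). congruence.
  - destruct H1 as [[G1 [G2 [A [B [_ [E' _]]]]]] _]. congruence.
  - destruct H2 as [[A [B [D [E1 E2]]]] Hf1].
    destruct H1 as [[G1 [G2 [A' [B' [E3 [_ [E4 [_ Hi]]]]]]]] [Hf2 _]].
    pose proof (focused_foc _ Hf2) as K. rewrite E4 in K. simpl in K.
    exfalso. apply (head_prod_irred G1 G2 A B D A' K Hi). congruence.
  - destruct H1 as [[G1 [G2 [A [B [E1 [E2 [E3 [E4 Hi]]]]]]]] [Hf1 Hf1']].
    destruct H2 as [[H1 [H2 [A' [B' [E1' [E2' [E3' [E4' Hi']]]]]]]] [Hf2 Hf2']].
    injection E as <- <-. subst. injection E2' as <- <-.
    pose proof (focused_foc _ Hf1) as K1. rewrite E3 in K1. simpl in K1.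
    pose proof (focused_foc _ Hf2) as K2. rewrite E3' in K2. simpl in K2.
    apply foc_front in K1. apply foc_front in K2.
    destruct (split_unique _ _ _ _ E1' (eq_trans K1 (eq_sym K2))) as [-> ->].
    f_equal.
    + apply IH1; auto. congruence.
    + apply IH2; auto. congruence.
Qed.

Lemma classical_filter {T} (P : T -> Prop) (l : list T) :
  exists l', NoDup l' /\ forall x, In x l' <-> In x l /\ P x.
Proof.
  induction l as [|a l IHl].
  - exists []. split; [constructor| simpl; tauto].
  - destruct IHl as [l' [Hn Hi]].
    destruct (classic (P a /\ ~ In a l')) as [[Ha Hn']|Hno].
    + exists (a::l'). split. constructor; auto.
      intros x; simpl; split; intros H.
      * destruct H as [<-|H]; [auto | apply Hi in H; tauto].
      * destruct H as [[<-|H] Hp]; [left; auto | right; apply Hi; auto].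
    + exists l'. split; auto. intros x; simpl; split; intros H.
      * apply Hi in H; tauto.
      * destruct H as [[<-|H] Hp].
        -- apply NNPP. intro Hc. apply Hno. auto.
        -- apply Hi; auto.
Qed.

Fixpoint enum (fuel : nat) (s : list nat) : list formula :=
  match fuel with
  | 0 => []
  | S f => map Atom s ++
     flat_map (fun k => map (fun ab => Prod (fst ab) (snd ab))
        (list_prod (enum f (firstn k s)) (enum f (skipn k s)))) (seq 0 (S (length s)))
  end.

Lemma firstn_len_app {T} (l1 l2 : list T) : firstn (length l1) (l1 ++ l2) = l1.
Proof. induction l1; simpl. destruct l2; auto. f_equal; auto. Qed.

Lemma skipn_len_app {T} (l1 l2 : list T) : skipn (length l1) (l1 ++ l2) = l2.
Proof. induction l1; simpl; auto. Qed.

Lemma enum_complete : forall A fuel, fsize A < fuel -> In A (enum fuel (frontier A)).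
Proof.
  induction A as [p|A1 IH1 A2 IH2]; intros [|f] H; simpl in H; try lia.
  - simpl. left; auto.
  - cbn [enum]. apply in_or_app; right. apply in_flat_map.
    exists (length (frontier A1)). split.
    + apply in_seq. simpl. rewrite length_app. lia.
    + simpl frontier. rewrite firstn_len_app, skipn_len_app.
      apply in_map_iff. exists (A1, A2). split; auto.
      apply in_prod; [apply IH1 | apply IH2]; lia.
Qed.

Lemma deriv_list : forall L : list (formula*formula), NoDup L ->
  (forall x, In x L -> foc [fst x] (snd x)) ->
  exists D, NoDup D /\
    (forall d, In d D <-> focused d /\ exists A B, concl d = ([A],B) /\ In (A,B) L) /\
    length D = length L.
Proof.
  induction L as [|[A B] L IH]; intros Hn Hf.
  - exists []. split; [constructor|]. split; [|reflexivity]. intros d; simpl.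
    split; [tauto|]. intros [_ [A [B [_ []]]]].
  - inversion Hn as [|? ? Hnin Hn']; subst.
    destruct IH as [D [HD [Hi Hl]]]; auto.
    { intros x Hx; apply Hf; simpl; auto. }
    destruct (foc_focused _ _ (Hf (A,B) (or_introl eq_refl))) as [d0 [Hd0 Ec0]].
    exists (d0 :: D). split; [|split].
    + constructor; auto. intro Hin. apply Hi in Hin.
      destruct Hin as [_ [A' [B' [E' Hin]]]]. rewrite Ec0 in E'.
      injection E' as <- <-. auto.
    + intros d. simpl. split.
      * intros [<-|Hin]. split; auto. exists A, B. auto.
        apply Hi in Hin. destruct Hin as [Hd [A' [B' [E' Hin]]]].
        split; auto. exists A', B'. auto.
      * intros [Hd [A' [B' [E' [Eq|Hin]]]]].
        -- left. injection Eq as -> ->. apply focused_unique; auto. rewrite Ec0, E'. reflexivity.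
        -- right. apply Hi. split; auto. exists A', B'. auto.
    + simpl. auto.
Qed.

Theorem proposition3p1 (n : nat) :
  exists N : nat, card_is (counted_deriv n 1) N /\ card_is (tamari_interval n) N.
Proof.
  set (E := enum (S n) (seq 0 (S n))).
  destruct (classical_filter (tamari_interval n) (list_prod E E)) as [LI [HnI HiI]].
  assert (HI : forall x, In x LI <-> tamari_interval n x).
  { intros [A B]. rewrite HiI. split; [tauto|]. intros HT. split; auto.
    destruct HT as [s1 [f1 [s2 [f2 _]]]]. cbn [fst snd] in s1, f1, s2, f2.
    apply in_prod; unfold E.
    - rewrite <- f1. apply enum_complete. lia.
    - rewrite <- f2. apply enum_complete. lia. }
  destruct (deriv_list LI HnI) as [D [HnD [HiD HlD]]].
  { intros [A B] Hx. apply HI in Hx. destruct Hx as [_ [_ [_ [_ T]]]].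
    apply complete. exact T. }
  exists (length LI). split.
  - exists D. split; auto. split; auto. intros d. rewrite HiD. split.
    + intros [Hf [s [fr l]]].
      split; auto.
      pose proof (focused_foc _ Hf) as K.
      destruct (concl d) as [G C] eqn:Ec. simpl in *.
      destruct G as [|A [|? ?]]; simpl in l; try discriminate.
      exists A, C. split; auto. apply HI.
      pose proof (foc_front _ _ K) as Fr. unfold flat in Fr. simpl in Fr.
      rewrite app_nil_r in Fr.
      pose proof (front_len A) as LA. pose proof (front_len C) as LC.
      rewrite Fr in LA.
      unfold tamari_interval; simpl. repeat split; try congruence; try lia.
      apply sound in K. exact K.
    + intros [Hf [A [B [Ec Hin]]]]. apply HI in Hin.
      destruct Hin as [_ [_ [s2 [f2 _]]]]. cbn [fst snd] in s2, f2.
      unfold counted_deriv. rewrite Ec. cbn [fst snd length]. auto.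
  - exists LI. split; [exact HnI|split; [|reflexivity]]. intros x; rewrite HI; tauto.
Qed.
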